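(* For any system $\mathcal{G}$, if $\mathcal{G}\models\mathit{NDS}$ then $\mathcal{G}\models\mathit{GNI}$, where $\mathit{NDS}:=\neg\Big(\exists\pi_1.\langle\langle\{\xi_H\}\rangle\rangle\pi_2.\ \square\big(\bigwedge_{a\in L}a_{\pi_1}\leftrightarrow a_{\pi_2}\big)\rightarrow\lozenge\big(\bigvee_{a\in O}a_{\pi_1}\not\leftrightarrow a_{\pi_2}\big)\Big)$ and $\mathit{GNI}:=\forall\pi_1.\forall\pi_2.\exists\pi_3.\ \square\big(\bigwedge_{a\in H}a_{\pi_1}\leftrightarrow a_{\pi_3}\big)\wedge\square\big(\bigwedge_{a\in O}a_{\pi_2}\leftrightarrow a_{\pi_3}\big)$.
   Context: A multi-stage concurrent game structure (MSCGS) is $\mathcal{G}=(S,s_0,\Xi,\mathscr{M},\delta,d,\mathbf{AP},\ell)$: finite states $S$, initial state $s_0$, finite agents $\Xi$, finite moves $\mathscr{M}$, transition function $\delta:S\times(\Xi\to\mathscr{M})\to S$, stage function $d:\Xi\to\mathbb{N}$, atomic propositions $\mathbf{AP}$, labelling $\ell:S\to2^{\mathbf{AP}}$. A system here is an MSCGS with agents $\xi_N$ (non-determinism), $\xi_H$ (high-security inputs) and $\xi_L$ (low-security inputs), where $\mathbf{AP}$ contains pairwise disjoint sets $H$ (high inputs), $L$ (low inputs), $O$ (outputs), and the move of $\xi_H$ (resp. $\xi_L$) determines the values of the propositions in $H$ (resp. $L$) in the next state. In $\mathit{NDS}$ the implication is inside the scope of both quantifiers. Semantics of $\texttt{HyperATL}^*$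 used here: a strategy for agent $\xi$ is $f_\xi:S^+\times(\{\xi'\mid d(\xi')<d(\xi)\}\to\mathscr{M})\to\mathscr{M}$; for $A\subseteq\Xi$, strategies $F_A$ and state $s$, $\mathit{out}(\mathcal{G},s,F_A)$ is the set of $u\in S^\omega$ with $u(0)=s$ such that for all $i$ there is a global move vector $\sigma$ with $\delta(u(i),\sigma)=u(i+1)$ and $\sigma(\xi)=f_\xi(u[0,i],\sigma_{\mid\{\xi'\mid d(\xi')<d(\xi)\}})$ for all $\xi\in A$. For a path assignment $\Pi$, $\Pi\models\langle\langle A\rangle\rangle\pi.\varphi$ iff there exist $F_A$ such that for all $t\in\mathit{out}(\mathcal{G},\Pi(\epsilon)(0),F_A)$, $\Pi[\pi\mapsto t]\models\varphi$, where $\Pi(\epsilon)$ is the most recently added path ($\Pi(\epsilon)(0)=s_0$ if $\Pi$ is empty); $\forall\pi=\langle\langle\emptyset\rangle\rangle\pi$, $\exists\pi=\langle\langle\Xi\rangle\rangle\pi$; $a_\pi$ holds iff $a\in\ell$ of the current state of the path bound to $\pi$; temporal operators are interpreted synchronously; $\neg$ is negation. $\mathcal{G}\models\varphi$ iff the empty assignment satisfies $\varphi$. *)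

(* Defs.v *)
From mathcomp Require Import all_boot.
Set Implicit Arguments. Unset Strict Implicit. Unset Printing Implicit Defensive.

Record MSCGS := {
  st : finType;
  s0 : st;
  agent : finType;
  move : finType;
  delta : st -> (agent -> move) -> st;
  stage : agent -> nat;
  AP : finType;
  lab : st -> {set AP}
}.

Section Semantics.
Variable G : MSCGS.

Definition path := nat -> st G.

Definition prefix (u : path) (i : nat) : seq (st G) := [seq u j | j <- iota 0 i.+1].

(* A strategy for each agent: f_xi : S^+ x ({xi' | d xi' < d xi} -> M) -> M,
   represented as a function on full move vectors that only depends on the
   moves of agents of strictly smaller stage. *)
Definition strategies := agent G -> seq (st G) -> (agent G -> move G) -> move G.

Definition stage_respecting (A : {set agent G}) (F : strategies) : Prop :=
  forall xi, xi \in A -> forall p (s1 s2 : agent G -> move G),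
    (forall xi', stage xi' < stage xi -> s1 xi' = s2 xi') ->
    F xi p s1 = F xi p s2.

Definition out (s : st G) (A : {set agent G}) (F : strategies) (u : path) : Prop :=
  u 0 = s /\
  forall i, exists sigma : agent G -> move G,
    delta (u i) sigma = u i.+1 /\
    forall xi, xi \in A -> sigma xi = F xi (prefix u i) sigma.

Inductive hform :=
| HTrue
| HAtom of AP G & nat
| HNeg of hform
| HAnd of hform & hform
| HNext of hform
| HUntil of hform & hform
| HQuant of {set agent G} & nat & hform.

Definition HOr f g := HNeg (HAnd (HNeg f) (HNeg g)).
Definition HImp f g := HOr (HNeg f) g.
Definition HIff f g := HAnd (HImp f g) (HImp g f).
Definition HEv f := HUntil HTrue f.
Definition HGlob f := HNeg (HEv (HNeg f)).
Definition HForall pi f := HQuant set0 pi f.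
Definition HExists pi f := HQuant setT pi f.
Definition HBigAnd (s : seq hform) := foldr HAnd HTrue s.
Definition HBigOr (s : seq hform) := foldr HOr (HNeg HTrue) s.

(* path assignments: most recently added path first *)
Definition assignment := seq (nat * path).

Definition shift (k : nat) (P : assignment) : assignment :=
  [seq (x.1, fun j => x.2 (k + j)) | x <- P].

Fixpoint lookup (pi : nat) (P : assignment) : option path :=
  match P with
  | [::] => None
  | x :: P' => if x.1 == pi then Some x.2 else lookup pi P'
  end.

Definition cur_state (P : assignment) : st G :=
  match P with [::] => s0 G | x :: _ => x.2 0 end.

Fixpoint sat (P : assignment) (f : hform) : Prop :=
  match f with
  | HTrue => True
  | HAtom a pi => match lookup pi P with Some t => a \in lab (t 0) | None => False end
  | HNeg g => ~ sat P g
  | HAnd g h => sat P g /\ sat P h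
  | HNext g => sat (shift 1 P) g
  | HUntil g h => exists k, sat (shift k P) h /\ forall j, j < k -> sat (shift j P) g
  | HQuant A pi g =>
      exists F : strategies, stage_respecting A F /\
        forall t, out (cur_state P) A F t -> sat ((pi, t) :: P) g
  end.

Definition models (f : hform) : Prop := sat [::] f.

Definition is_system (xiN xiH xiL : agent G) (H L O : {set AP G}) : Prop :=
  [/\ [/\ xiN != xiH, xiN != xiL & xiH != xiL],
      (forall xi, xi = xiN \/ xi = xiH \/ xi = xiL),
      [/\ [disjoint H & L], [disjoint H & O] & [disjoint L & O]],
      (forall s s' (sg sg' : agent G -> move G), sg xiH = sg' xiH ->
          lab (delta s sg) :&: H = lab (delta s' sg') :&: H) &
      (forall s s' (sg sg' : agent G -> move G), sg xiL = sg' xiL ->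
          lab (delta s sg) :&: L = lab (delta s' sg') :&: L)].

Definition eq_on (X : {set AP G}) (p q : nat) : hform :=
  HBigAnd [seq HIff (HAtom a p) (HAtom a q) | a <- enum X].

Definition NDS (xiH : agent G) (L O : {set AP G}) : hform :=
  HNeg (HExists 1 (HQuant [set xiH] 2
     (HImp (HGlob (eq_on L 1 2))
           (HEv (HBigOr [seq HNeg (HIff (HAtom a 1) (HAtom a 2)) | a <- enum O]))))).

Definition GNI (H O : {set AP G}) : hform :=
  HForall 1 (HForall 2 (HExists 3
     (HAnd (HGlob (eq_on H 1 3)) (HGlob (eq_on O 2 3))))).

End Semantics.

(* Main.v *)
Require Import Defs.
From mathcomp Require Import all_boot.
From Stdlib Require Import Classical ClassicalEpsilon FunctionalExtensionality.
Set Implicit Arguments. Unset Strict Implicit.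

Section H.
Variable G : MSCGS.

Lemma lookup_shift k pi (P : assignment G) :
  lookup pi (shift k P) = omap (fun t j => t (k + j)) (lookup pi P).
Proof. elim: P => //= x P ->; by case: ifP. Qed.

Lemma sat_iff (P : assignment G) a p q tp tq :
  lookup p P = Some tp -> lookup q P = Some tq ->
  sat P (HIff (HAtom a p) (HAtom a q)) <-> (a \in lab (tp 0) <-> a \in lab (tq 0)).
Proof.
move=> hp hq; rewrite /HIff /HImp /HOr /= hp hq.
case: (a \in lab (tp 0)); case: (a \in lab (tq 0)); rewrite /is_true; intuition.
Qed.

Lemma sat_bigand_map (P : assignment G) (T : eqType) (g : T -> hform G) (s : seq T) :
  sat P (HBigAnd (map g s)) <-> forall a, a \in s -> sat P (g a).
Proof.
elim: s => [|x s IH] /=; first by split.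
split.
- move=> [h1 /IH h2] a; rewrite in_cons => /orP [/eqP -> //|]; exact: h2.
- move=> h; split; first by apply: h; rewrite in_cons eqxx.
  apply/IH => a ha; apply: h; by rewrite in_cons ha orbT.
Qed.

Lemma sat_bigor_map (P : assignment G) (T : eqType) (g : T -> hform G) (s : seq T) :
  ~ sat P (HBigOr (map g s)) -> forall a, a \in s -> ~ sat P (g a).
Proof.
elim: s => [|x s IH] //= h a.
have [h1 h2] : ~ sat P (g x) /\ ~ sat P (HBigOr (map g s)).
  apply: NNPP => hn; apply: h => -[h1 h2]; apply: hn; split; auto.
rewrite in_cons => /orP [/eqP -> //|]; exact: IH.
Qed.

Lemma sat_glob (P : assignment G) f : sat P (HGlob f) <-> forall k, sat (shift k P) f.
Proof.
rewrite /HGlob /HEv /=; split.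
- move=> h k; apply: NNPP => hk; apply: h; exists k; split => //.
- by move=> h [k [hk _]]; apply: hk.
Qed.

Lemma size_prefix (u : Defs.path G) i : size (Defs.prefix u i) = i.+1.
Proof. by rewrite /Defs.prefix size_map size_iota. Qed.

Definition follow (tau : nat -> agent G -> move G) : strategies G :=
  fun xi p _ => tau (size p).-1 xi.

Lemma follow_sr A tau : stage_respecting A (follow tau).
Proof. by []. Qed.

Lemma follow_out s tau (u : Defs.path G) :
  out s setT (follow tau) u -> forall i, delta (u i) (tau i) = u i.+1.
Proof.
move=> [_ h] i; have [sg [h1 h2]] := h i.
have -> : tau i = sg.
  apply: functional_extensionality => xi; rewrite h2 ?inE //.
  by rewrite /follow size_prefix.
done.
Qed.

Lemma follow_eq tau (u t : Defs.path G) :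
  u 0 = t 0 -> (forall i, delta (u i) (tau i) = u i.+1) ->
  (forall i, delta (t i) (tau i) = t i.+1) -> u = t.
Proof.
move=> h0 hu ht; apply: functional_extensionality; elim => // i IH.
by rewrite -hu -ht IH.
Qed.

Lemma choose_tau (Q : nat -> (agent G -> move G) -> Prop) (u : Defs.path G) :
  (forall i, exists sigma : agent G -> move G,
    delta (u i) sigma = u i.+1 /\ Q i sigma) ->
  exists tau, forall i, delta (u i) (tau i) = u i.+1.
Proof.
move=> h.
have h' : forall i, exists sigma, delta (u i) sigma = u i.+1.
  by move=> i; have [sg [? _]] := h i; exists sg.
exists (fun i => proj1_sig (constructive_indefinite_description _ (h' i))).
move=> i; exact: (proj2_sig (constructive_indefinite_description _ (h' i))).
Qed.

End H.

Theorem lemma4p3 (G : MSCGS) (xiN xiH xiL : agent G) (H L O : {set AP G}) :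
  is_system xiN xiH xiL H L O ->
  models (NDS xiH L O) -> models (GNI H O).
Proof.
move=> [_ _ _ hH _] hNDS.
rewrite /models /GNI /=.
exists (fun xi _ s => s xi); split; first by move=> xi; rewrite inE.
move=> t1 [h10 h1].
exists (fun xi _ s => s xi); split; first by move=> xi; rewrite inE.
move=> t2 [h20 h2]; rewrite /= in h20.
have [tau1 ht1] := choose_tau (Q := fun _ _ => _) h1.
have [tau2 ht2] := choose_tau (Q := fun _ _ => _) h2.
apply: NNPP => hneg; apply: hNDS.
exists (follow tau2); split; first exact: follow_sr.
move=> t ht.
have et : t = t2.
  apply: (follow_eq (tau := tau2)) => //; last exact: follow_out ht.
  by case: ht => -> _; rewrite h20 h10.
subst t.
apply: NNPP => h; apply: hneg.
have [t [[ht0 htt] hns]] : exists t, out (t2 0) [set xiH] (follow tau1) t /\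
    ~ sat [:: (2, t); (1, t2)]
      (HImp (HGlob (eq_on L 1 2))
        (HEv (HBigOr [seq HNeg (HIff (HAtom a 1) (HAtom a 2)) | a <- enum O]))).
  apply: NNPP => hn; apply: h; exists (follow tau1); split; first exact: follow_sr.
  move=> t ho; apply: NNPP => hs; apply: hn; exists t; split; auto.
have hev : ~ sat [:: (2, t); (1, t2)]
    (HEv (HBigOr [seq HNeg (HIff (HAtom a 1) (HAtom a 2)) | a <- enum O])).
  move=> hc; apply: hns => /= -[_ hc']; exact: hc' hc.
have hO : forall k a, a \in O -> (a \in lab (t2 k) <-> a \in lab (t k)).
  move=> k a ha.
  have hk : ~ sat (shift k [:: (2, t); (1, t2)])
      (HBigOr [seq HNeg (HIff (HAtom a 1) (HAtom a 2)) | a <- enum O]).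
    move=> hc; apply: hev; exists k; split => //.
  have hs : sat (shift k [:: (2, t); (1, t2)]) (HIff (HAtom a 1) (HAtom a 2)).
    apply: NNPP => hc; apply: (sat_bigor_map hk (a := a)); first by rewrite mem_enum.
    exact: hc.
  move: hs.
  rewrite (@sat_iff _ _ a 1 2 (fun j => t2 (k + j)) (fun j => t (k + j))) //.
  by rewrite addn0.
have hHk : forall k a, a \in H -> (a \in lab (t1 k) <-> a \in lab (t k)).
  move=> k a ha; case: k => [|k].
    by rewrite ht0 h20.
  have [sg [hs1 hs2]] := htt k.
  have := hH (t k) (t1 k) sg (tau1 k).
  rewrite hs2 ?inE // /follow size_prefix /= => /(_ erefl).
  rewrite hs1 ht1 => /setP /(_ a); rewrite !inE ha !andbT => ->; done.
have [tau3 ht3] := choose_tau (Q := fun _ _ => _) htt.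
exists (follow tau3); split; first exact: follow_sr.
move=> u hu.
have eu : u = t.
  apply: (follow_eq (tau := tau3)) => //; last exact: follow_out hu.
  by case: hu => -> _.
subst u.
have g1 : sat [:: (3, t); (2, t2); (1, t1)] (HGlob (eq_on H 1 3)).
  apply/sat_glob => k; rewrite /eq_on; apply/sat_bigand_map => a; rewrite mem_enum => ha.
  rewrite (@sat_iff _ _ a 1 3 (fun j => t1 (k + j)) (fun j => t (k + j))) //.
  by rewrite addn0; apply: hHk.
have g2 : sat [:: (3, t); (2, t2); (1, t1)] (HGlob (eq_on O 2 3)).
  apply/sat_glob => k; rewrite /eq_on; apply/sat_bigand_map => a; rewrite mem_enum => ha.
  rewrite (@sat_iff _ _ a 2 3 (fun j => t2 (k + j)) (fun j => t (k + j))) //.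
  by rewrite addn0; apply: hO.
exact: (conj g1 g2).
Qed.
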